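(* Let $\mathcal{P}=(\mathcal{R},\mathcal{F},\mathcal{D},\mathcal{B})$ be a ground Capacity Logic Program. If $K_1$ and $K_2$ are pairwise incompatible sets of capacity composite choices for $\mathcal{P}$ that are equivalent ($\omega_{K_1}=\omega_{K_2}$), then $\xi_c(K_1)=\xi_c(K_2)$.
   Context: All sets are finite; there are no function symbols. Belief domains: a belief domain $D$ has a finite nonempty frame of discernment $X_D$ and a mass function $\mathit{mass}(D,\cdot):\mathbb{P}(X_D)\to\mathbb{R}$ with $\mathit{mass}(D,\emptyset)=0$, $\mathit{mass}(D,A)\ge 0$, $\sum_{A\subseteq X_D}\mathit{mass}(D,A)=1$. For $A\subseteq X_D$: $\mathit{Belief}(D,A)=\sum_{B\subseteq A}\mathit{mass}(D,B)$, $\mathit{Plaus}(D,A)=1-\mathit{Belief}(D,X_D\setminus A)$. Capacity Logic Program (CaLP): a tuple $\mathcal{P}=(\mathcal{R},\mathcal{F},\mathcal{D},\mathcal{B})$ where $\mathcal{R}$ is a finite set of ground rules, $\mathcal{F}$ a finite set of ground probabilistic facts $p::f$ ($p\in[0,1]$, $f$ a ground atom), $\mathcal{D}$ a finite set of belief domains, and $\mathcal{B}$ the set of all ground belief facts $\mathit{belief}(D,B)$ with $D\in\mathcal{D}$, $B\subseteq X_D$. We write $\mathit{belief}(D,\neg B)$ for $\mathit{belief}(D,X_D\setminus B)$. Canonicalization: for a set $Bel$ of belief facts, $\mathrm{canon}(Bel)=\{\mathit{belief}(D,\bigcap_{\mathit{belief}(D,B_i)\in Bel}B_i)\mid D \text{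 a domain occurring in } Bel\}$; $Bel$ is consistent if $\mathrm{canon}(Bel)$ contains no fact with event $\emptyset$. Belief worlds: a belief world is $w=(\mathcal{R},\mathcal{F}',\mathcal{D},\mathcal{B}')$ with $\mathcal{F}'\subseteq\mathcal{F}$ and $\mathcal{B}'\subseteq\mathcal{B}$ consistent, canonical, and containing exactly one belief fact for every domain in $\mathcal{D}$. $W^{\mathcal{D}}_{\mathcal{P}}$ is the set of belief worlds. Capacity atomic choices: either an atomic Bayesian choice $(f,k)$ with $p::f\in\mathcal{F}$ and $k\in\{0,1\}$, or an atomic belief choice $\mathit{belief}(D,B)$ with $D\in\mathcal{D}$, $B\subseteq X_D$. For a set $\kappa$ of atomic choices, $Bay(\kappa)$ is its set of Bayesian choices and $Bel(\kappa)$ its set of belief choices. $\kappa$ is consistent if $Bay(\kappa)$ contains no pair $(f,0),(f,1)$ and $Bel(\kappa)$ is consistent. A capacity composite choice is a consistent set of capacity atomic choices. Compatible worlds: for a capacity composite choice $\kappa$, $\omega_\kappa$ is the set of belief worlds $(\mathcal{R},\mathcal{F}',\mathcal{D},\mathcal{B}')$ such that $f\in\mathcal{F}'$ for every $(f,1)\in\kappa$, $f\notin\mathcal{F}'$ for every $(f,0)\in\kappa$, and $\mathrm{canon}(Bel(\kappa))\subseteq\mathcal{B}'$. For a set $K$, $\omega_K=\bigcup_{\kappa\in K}\omega_\kappa$. $K_1,K_2$ are equivalent if $\omega_{K_1}=\omega_{K_2}$. Two capacity composite choices are incompatible if their union is not consistent; $K$ is pairwise incompatible if any two distinct elements are incompatible.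 Interval arithmetic: $[a,b]\,\widehat{\times}\,[c,d]=[ac,bd]$, $[a,b]\,\widehat{+}\,[c,d]=[a+c,b+d]$ (nonnegative intervals), with iterated versions $\widehat{\prod},\widehat{\sum}$. Capacity of capacity composite choices: $\rho_c(\kappa)=\prod_{(f,1)\in\kappa}p_f\prod_{(f,0)\in\kappa}(1-p_f)$, where $p_f$ is the probability of $f$ in $\mathcal{F}$. Then $\rho^{Comp}_{\mathcal{B}}(\kappa)=[\rho_c(\kappa),\rho_c(\kappa)]\ \widehat{\times}\ \widehat{\prod}_{\mathit{belief}(D,E)\in\mathrm{canon}(Bel(\kappa))}[\mathit{Belief}(D,E),\mathit{Plaus}(D,E)]$, and for a pairwise incompatible set $K$, $\xi_c(K)=\widehat{\sum}_{\kappa\in K}\rho^{Comp}_{\mathcal{B}}(\kappa)$. *)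

(* Defs.v *)
From HB Require Import structures.
From mathcomp Require Import all_boot all_order all_algebra.
Set Implicit Arguments. Unset Strict Implicit. Unset Printing Implicit Defensive.
Import Order.TTheory GRing.Theory Num.Theory.
Local Open Scope ring_scope.

(* Ground Capacity Logic Programs.
   - Fct : finite type indexing the probabilistic facts p::f of F, prob f = p_f.
   - Dom : finite type of belief domains; U : a finite universe containing all
     frames; X D : {set U} is the frame of discernment of D.
   - mass D A : the mass function of D (only its values on subsets of X D
     matter).
   The rules R play no role in worlds' identity nor in the capacities, so they
   are omitted (every belief world contains the same R). *)

Section CaLP.
Variable R : realFieldType.
Variables (Fct Dom U : finType).
Variable prob : Fct -> R.
Variable X : Dom -> {set U}.
Variable mass : Dom -> {set U} -> R.

Definition is_mass_assignment : Prop :=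
  forall D : Dom,
    [/\ mass D set0 = 0,
        (forall A : {set U}, A \subset X D -> 0 <= mass D A)
      & \sum_(A : {set U} | A \subset X D) mass D A = 1].

Definition Belief (D : Dom) (A : {set U}) : R :=
  \sum_(B : {set U} | B \subset A) mass D B.

Definition Plaus (D : Dom) (A : {set U}) : R :=
  1 - Belief D (X D :\: A).

Definition belief_fact := (Dom * {set U})%type.
(* inl (f,k) : atomic Bayesian choice (f,k) ; inr (D,B) : belief(D,B) *)
Definition atomic := ((Fct * bool) + belief_fact)%type.

Definition Bay (k : {set atomic}) : {set Fct * bool} := [set c | inl c \in k].
Definition BelS (k : {set atomic}) : {set belief_fact} := [set b | inr b \in k].

Definition canon (S : {set belief_fact}) : {set belief_fact} :=
  [set (D, \bigcap_(b in S | b.1 == D) b.2) | D in [set b.1 | b in S]].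

Definition bel_consistent (S : {set belief_fact}) : Prop :=
  forall b, b \in canon S -> b.2 != set0.

Definition consistent (k : {set atomic}) : Prop :=
  (forall f : Fct, ~ ((f, false) \in Bay k /\ (f, true) \in Bay k))
  /\ bel_consistent (BelS k).

(* a capacity composite choice: a consistent set of capacity atomic choices
   (belief atoms must be ground belief facts of B, i.e. B subset of X_D) *)
Definition composite_choice (k : {set atomic}) : Prop :=
  consistent k /\ (forall b, b \in BelS k -> b.2 \subset X b.1).

(* belief worlds (R, F', D, B') represented by (F', B') *)
Definition is_belief_world (Fp : {set Fct}) (Bp : {set belief_fact}) : Prop :=
  [/\ (forall b, b \in Bp -> b.2 \subset X b.1),
      bel_consistent Bp,
      canon Bp = Bp
    & forall D : Dom, exists! B : {set U}, (D, B) \in Bp].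

Definition in_omega (k : {set atomic}) (Fp : {set Fct}) (Bp : {set belief_fact})
  : Prop :=
  [/\ (forall f, (f, true) \in Bay k -> f \in Fp),
      (forall f, (f, false) \in Bay k -> f \notin Fp)
    & canon (BelS k) \subset Bp].

Definition in_omegaK (K : {set {set atomic}}) (Fp : {set Fct})
  (Bp : {set belief_fact}) : Prop :=
  exists2 k, k \in K & in_omega k Fp Bp.

Definition equivalent (K1 K2 : {set {set atomic}}) : Prop :=
  forall Fp Bp, is_belief_world Fp Bp -> (in_omegaK K1 Fp Bp <-> in_omegaK K2 Fp Bp).

Definition incompatible (k1 k2 : {set atomic}) : Prop := ~ consistent (k1 :|: k2).

Definition pairwise_incompatible (K : {set {set atomic}}) : Prop :=
  forall k1 k2, k1 \in K -> k2 \in K -> k1 != k2 -> incompatible k1 k2.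

(* interval arithmetic on pairs (lower, upper) *)
Definition imul (a b : R * R) : R * R := (a.1 * b.1, a.2 * b.2).
Definition iadd (a b : R * R) : R * R := (a.1 + b.1, a.2 + b.2).

Definition rho_c (k : {set atomic}) : R :=
  (\prod_(f : Fct | (f, true) \in Bay k) prob f) *
  (\prod_(f : Fct | (f, false) \in Bay k) (1 - prob f)).

Definition rho_comp (k : {set atomic}) : R * R :=
  imul (rho_c k, rho_c k)
       (\big[imul/(1, 1)]_(b in canon (BelS k)) (Belief b.1 b.2, Plaus b.1 b.2)).

Definition xi_c (K : {set {set atomic}}) : R * R :=
  \big[iadd/(0, 0)]_(k in K) rho_comp k.

End CaLP.

(* Main.v *)
Require Import Defs.
From HB Require Import structures.
From mathcomp Require Import all_boot all_order all_algebra.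
Import Order.TTheory GRing.Theory Num.Theory.
Local Open Scope ring_scope.
Set Implicit Arguments. Unset Strict Implicit. Unset Printing Implicit Defensive.

Section Sets.
Variables (Fct Dom U : finType) (X : Dom -> {set U}).
Hypothesis hX : forall D, X D != set0.
Notation atm := (atomic Fct Dom U).
Notation bf := (belief_fact Dom U).

Definition dom (S : {set bf}) : {set Dom} := [set b.1 | b in S].
Definition II (S : {set bf}) (D : Dom) : {set U} := \bigcap_(b in S | b.1 == D) b.2.

Lemma canonE S : canon S = [set (D, II S D) | D in dom S].
Proof. by []. Qed.

Lemma II_nodom S D : D \notin dom S -> II S D = setT.
Proof.
move=> nD; rewrite /II big_pred0 // => b; apply/negP => /andP[bS /eqP eD].
by move: nD; rewrite -eD; move/negP; apply; apply/imsetP; exists b.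
Qed.

Lemma II_sub S D : D \in dom S -> (forall b, b \in S -> b.2 \subset X b.1) ->
  II S D \subset X D.
Proof.
move=> /imsetP[b bS ->] hS; apply: subset_trans (hS b bS).
by apply: bigcap_inf; rewrite bS eqxx.
Qed.

Lemma II_U S1 S2 D : II (S1 :|: S2) D = II S1 D :&: II S2 D.
Proof.
apply/setP => x; rewrite inE; apply/bigcapP/andP.
  move=> h; split; apply/bigcapP => b /andP[bS eD]; apply: h;
   by rewrite inE bS ?orbT eD.
move=> [/bigcapP h1 /bigcapP h2] b; rewrite inE => /andP[/orP[bS|bS] eD].
  by apply: h1; rewrite bS.
by apply: h2; rewrite bS.
Qed.

Lemma dom_U S1 S2 D : (D \in dom (S1 :|: S2)) = (D \in dom S1) || (D \in dom S2).
Proof.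
apply/imsetP/orP.
  by move=> [b]; rewrite inE => /orP[bS|bS] ->; [left|right]; apply/imsetP; exists b.
by move=> [] /imsetP[b bS ->]; exists b; rewrite // inE bS ?orbT.
Qed.

Lemma BelS_U (k1 k2 : {set atm}) : BelS (k1 :|: k2) = BelS k1 :|: BelS k2.
Proof. by apply/setP => b; rewrite !inE. Qed.

Lemma Bay_U (k1 k2 : {set atm}) : Bay (k1 :|: k2) = Bay k1 :|: Bay k2.
Proof. by apply/setP => b; rewrite !inE. Qed.

Definition Et (k : {set atm}) D := X D :&: II (BelS k) D.
Definition Bt (k : {set atm}) : {set bf} := [set (D, Et k D) | D in [set: Dom]].

Lemma mem_Bt k D B : ((D, B) \in Bt k) = (B == Et k D).
Proof.
apply/imsetP/eqP; first by move=> [D' _ [-> ->]].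
by move=> ->; exists D.
Qed.

Definition agree (k : {set atm}) (Fp : {set Fct}) : bool :=
  [forall f, (((f, true) \in Bay k) ==> (f \in Fp)) &&
             (((f, false) \in Bay k) ==> (f \notin Fp))].

Lemma agreeP k (Fp : {set Fct}) : reflect ((forall f, (f, true) \in Bay k -> f \in Fp) /\
   (forall f, (f, false) \in Bay k -> f \notin Fp)) (agree k Fp).
Proof.
apply: (iffP forallP).
  by move=> h; split=> f; have /andP[/implyP ? /implyP ?] := h f.
by move=> [h1 h2] f; apply/andP; split; apply/implyP; [apply h1|apply h2].
Qed.

Lemma in_omegaP k (Fp : {set Fct}) (Bp : {set bf}) : in_omega k Fp Bp <-> agree k Fp /\ canon (BelS k) \subset Bp.
Proof.
split; first by move=> [h1 h2 h3]; split => //; apply/agreeP.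
by move=> [/agreeP[h1 h2] h3].
Qed.

Section CC.
Variable k : {set atm}.
Hypothesis cc : composite_choice X k.

Lemma Et_dom D : D \in dom (BelS k) -> Et k D = II (BelS k) D.
Proof. by move=> hD; apply/setIidPr/II_sub => //; case: cc. Qed.

Lemma Et_nodom D : D \notin dom (BelS k) -> Et k D = X D.
Proof. by move=> hD; rewrite /Et II_nodom // setIT. Qed.

Lemma II_neq0 D : D \in dom (BelS k) -> II (BelS k) D != set0.
Proof.
move=> hD; case: cc => [[_ hc] _].
by apply: (hc (D, II (BelS k) D)); rewrite canonE; apply/imsetP; exists D.
Qed.

Lemma Et_neq0 D : Et k D != set0.
Proof.
case hD: (D \in dom (BelS k)); first by rewrite Et_dom // II_neq0.
by rewrite Et_nodom ?hD.
Qed.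

Lemma Bt_world (Fp : {set Fct}) : is_belief_world X Fp (Bt k).
Proof.
have hII : forall D, II (Bt k) D = Et k D.
  move=> D; rewrite /II (big_pred1 (D, Et k D)) // => -[D' B] /=.
  rewrite mem_Bt xpair_eqE andbC; case: eqP => [->|_] //=; by rewrite andbF.
have hdom : dom (Bt k) = setT.
  by apply/setP => D; rewrite inE; apply/imsetP; exists (D, Et k D); rewrite ?mem_Bt.
have hcan : canon (Bt k) = Bt k.
  by rewrite canonE hdom; apply: eq_imset => D; rewrite hII.
split => //.
- by move=> [D B]; rewrite mem_Bt => /eqP ->; apply: subsetIl.
- by rewrite /bel_consistent hcan => -[D B]; rewrite mem_Bt => /eqP ->; apply: Et_neq0.
- by move=> D; exists (Et k D); split; [rewrite mem_Bt | move=> B; rewrite mem_Bt => /eqP].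
Qed.

Lemma Bt_omega (Fp : {set Fct}) : agree k Fp -> in_omega k Fp (Bt k).
Proof.
move=> ha; apply/in_omegaP; split => //; apply/subsetP => b.
rewrite canonE => /imsetP[D hD ->]; by rewrite mem_Bt Et_dom.
Qed.
End CC.

Lemma omega_rel k1 k2 (Fp : {set Fct}) : in_omega k2 Fp (Bt k1) ->
  forall D, D \in dom (BelS k2) -> II (BelS k2) D = Et k1 D.
Proof.
move=> /in_omegaP[_ /subsetP hs] D hD; apply/eqP; rewrite -mem_Bt; apply: hs.
by rewrite canonE; apply/imsetP; exists D.
Qed.


Lemma chain k1 k2 k3 (Fp : {set Fct}) :
  composite_choice X k1 -> composite_choice X k2 -> composite_choice X k3 ->
  agree k1 Fp -> agree k3 Fp -> in_omega k2 Fp (Bt k1) -> in_omega k3 Fp (Bt k2) ->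
  consistent (k1 :|: k3).
Proof.
move=> c1 c2 c3 a1 a3 o12 o23; split.
  move=> f; rewrite Bay_U !in_setU => -[h0 h1].
  move/agreeP: a1 => [t1 f1]; move/agreeP: a3 => [t3 f3].
  have nF : f \notin Fp by case/orP: h0 => h; [apply f1|apply f3].
  have yF : f \in Fp by case/orP: h1 => h; [apply t1|apply t3].
  by rewrite yF in nF.
rewrite /bel_consistent BelS_U => b; rewrite canonE => /imsetP[D hD ->] /=.
rewrite II_U; rewrite dom_U in hD.
case d1: (D \in dom (BelS k1)).
  have e1 : II (BelS k1) D = Et k1 D by rewrite (Et_dom c1).
  have sub : Et k1 D \subset II (BelS k3) D.
    case d3: (D \in dom (BelS k3)); last by rewrite II_nodom ?d3 // subsetT.
    rewrite (omega_rel o23) //; case d2: (D \in dom (BelS k2)).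
      by rewrite (Et_dom c2) // (omega_rel o12).
    by rewrite (Et_nodom (k := k2)) ?d2 //; apply: subsetIl.
  by rewrite e1 (setIidPl sub) (Et_neq0 c1).
rewrite II_nodom ?d1 // setTI; rewrite d1 /= in hD.
by rewrite (omega_rel o23) // (Et_neq0 c2).
Qed.

Lemma Bt_inj (K : {set {set atm}}) (Fp : {set Fct}) :
  (forall k, k \in K -> composite_choice X k) -> pairwise_incompatible K ->
  {in [set k in K | agree k Fp] &, injective Bt}.
Proof.
move=> hK hpi k1 k2; rewrite !inE => /andP[i1 a1] /andP[i2 a2] e.
apply/eqP; apply/negPn/negP => ne; apply: (hpi _ _ i1 i2 ne).
apply: (chain (hK _ i1) (hK _ i1) (hK _ i2) a1 a2).
  exact (Bt_omega (hK _ i1) a1).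
by rewrite e; exact (Bt_omega (hK _ i2) a2).
Qed.

Lemma Bt_image (K1 K2 : {set {set atm}}) (Fp : {set Fct}) :
  (forall k, k \in K1 -> composite_choice X k) ->
  (forall k, k \in K2 -> composite_choice X k) ->
  pairwise_incompatible K1 -> equivalent X K1 K2 ->
  forall k, k \in K1 -> agree k Fp -> exists2 k', k' \in K2 & agree k' Fp /\ Bt k' = Bt k.
Proof.
move=> hK1 hK2 hpi1 heq k i a.
have c := hK1 _ i.
have [k' i' o'] : in_omegaK K2 Fp (Bt k).
  apply/(heq _ _ (Bt_world c Fp)); exists k => //; exact (Bt_omega c a).
have a' := proj1 ((in_omegaP k' Fp _).1 o').
have c' := hK2 _ i'.
have [k'' i'' o''] : in_omegaK K1 Fp (Bt k').
  apply/(heq _ _ (Bt_world c' Fp)); exists k' => //; exact (Bt_omega c' a').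
have a'' := proj1 ((in_omegaP k'' Fp _).1 o'').
have c'' := hK1 _ i''.
have ek : k'' = k.
  apply/eqP; apply/negPn/negP => ne; rewrite eq_sym in ne.
  by apply: (hpi1 _ _ i i'' ne); apply: (chain c c' c'' a a'' o' o'').
subst k''; exists k' => //; split => //.
rewrite /Bt; apply: eq_imset => D; congr pair.
case d': (D \in dom (BelS k')); first by rewrite (Et_dom c') // (omega_rel o').
case d: (D \in dom (BelS k)); first by rewrite (Et_dom c d) (omega_rel o'' d).
by rewrite (Et_nodom (k := k)) ?d // (Et_nodom (k := k')) ?d'.
Qed.

Lemma Bt_imageE (K1 K2 : {set {set atm}}) (Fp : {set Fct}) :
  (forall k, k \in K1 -> composite_choice X k) ->
  (forall k, k \in K2 -> composite_choice X k) ->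
  pairwise_incompatible K1 -> pairwise_incompatible K2 -> equivalent X K1 K2 ->
  Bt @: [set k in K1 | agree k Fp] = Bt @: [set k in K2 | agree k Fp].
Proof.
move=> hK1 hK2 hpi1 hpi2 heq.
have heq' : equivalent X K2 K1 by move=> ? ? w; split => h; apply/(heq _ _ w).
apply/eqP; rewrite eqEsubset; apply/andP; split; apply/subsetP => w /imsetP[k].
  rewrite inE => /andP[i a] ->; have [k' i' [a' e]] := Bt_image hK1 hK2 hpi1 heq i a.
  by apply/imsetP; exists k'; rewrite // inE i' a'.
rewrite inE => /andP[i a] ->; have [k' i' [a' e]] := Bt_image hK2 hK1 hpi2 heq' i a.
by apply/imsetP; exists k'; rewrite // inE i' a'.
Qed.

End Sets.

Section Sums.
Variables (R : realFieldType) (Fct Dom U : finType) (prob : Fct -> R) (X : Dom -> {set U}).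
Hypothesis hX : forall D, X D != set0.
Notation atm := (atomic Fct Dom U).

Definition G (g : Dom -> {set U} -> R) (k : {set atm}) : R :=
  \prod_(b in canon (BelS k)) g b.1 b.2.

Lemma G_Bt g (hg : forall D, g D (X D) = 1) k : composite_choice X k ->
  G g k = \prod_(b in Bt X k) g b.1 b.2.
Proof.
move=> cc; rewrite /G canonE (big_imset _ (h := fun D => (D, II (BelS k) D))) /=; last by move=> D1 D2 _ _ e; have := congr1 fst e.
rewrite /Bt (big_imset _ (h := fun D => (D, Et X k D))) /=; last by move=> D1 D2 _ _ e; have := congr1 fst e.
rewrite [RHS](bigID (fun D => D \in dom (BelS k))) /= [Y in _ = _ * Y]big1 ?mulr1.
  by apply: eq_big => [D|D hD]; [rewrite in_setT | rewrite (Et_dom cc)].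
by move=> D /andP[_ hD]; rewrite (Et_nodom X hD) hg.
Qed.

Lemma sumF g (hg : forall D, g D (X D) = 1) (K1 K2 : {set {set atm}}) (Fp : {set Fct}) :
  (forall k, k \in K1 -> composite_choice X k) ->
  (forall k, k \in K2 -> composite_choice X k) ->
  pairwise_incompatible K1 -> pairwise_incompatible K2 -> equivalent X K1 K2 ->
  \sum_(k in [set k in K1 | agree k Fp]) G g k = \sum_(k in [set k in K2 | agree k Fp]) G g k.
Proof.
move=> hK1 hK2 hpi1 hpi2 heq.
transitivity (\sum_(w in Bt X @: [set k in K1 | agree k Fp]) \prod_(b in w) g b.1 b.2).
  rewrite big_imset; last exact: Bt_inj.
  by apply: eq_bigr => k; rewrite inE => /andP[i _]; apply: G_Bt => //; apply: hK1.
rewrite (Bt_imageE hX Fp hK1 hK2 hpi1 hpi2 heq) big_imset; last exact: Bt_inj.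
by apply: eq_bigr => k; rewrite inE => /andP[i _]; rewrite G_Bt //; apply: hK2.
Qed.

Definition Pw (phi : {ffun Fct -> bool}) : R :=
  \prod_f (if phi f then prob f else 1 - prob f).
Definition Fs (phi : {ffun Fct -> bool}) : {set Fct} := [set f | phi f].

Lemma rho_expand (k : {set atm}) :
  (forall f, ~ ((f, false) \in Bay k /\ (f, true) \in Bay k)) ->
  rho_c prob k = \sum_phi (if agree k (Fs phi) then Pw phi else 0).
Proof.
move=> hc.
pose c f (b : bool) : R := if (if b then (f, false) \notin Bay k else (f, true) \notin Bay k)
  then (if b then prob f else 1 - prob f) else 0.
transitivity (\prod_f \sum_(b : bool) c f b).
  have e1 : \prod_(f | (f, true) \in Bay k) prob f =
    \prod_f (if (f, true) \in Bay k then prob f else 1) by rewrite big_mkcond.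
  have e2 : \prod_(f | (f, false) \in Bay k) (1 - prob f) =
    \prod_f (if (f, false) \in Bay k then 1 - prob f else 1) by rewrite big_mkcond.
  rewrite /rho_c e1 e2 -big_split /=; apply: eq_bigr => f _; rewrite big_bool /c /=.
  move: (hc f); case: ((f, true) \in Bay k); case: ((f, false) \in Bay k) => //= h.
  - by exfalso; apply: h.
  - by rewrite mulr1 addr0.
  - by rewrite mul1r add0r.
  - by rewrite mulr1 addrC subrK.
rewrite bigA_distr_bigA; apply: eq_bigr => phi _.
rewrite /Pw; case: (boolP (agree k (Fs phi))) => ha.
  move/agreeP: ha => [h1 h2]; apply: eq_bigr => f _; rewrite /c.
  case e: (phi f).
    by case: ifP => // /negbFE /h2; rewrite inE e.
  by case: ifP => // /negbFE /h1; rewrite inE e.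
move/forallPn: ha => [f]; have hF : (f \in Fs phi) = phi f by rewrite inE.
rewrite hF (bigD1 f) //= /c; case: (phi f) => /=;
  rewrite ?implybT ?implybF ?andbT ?negbK /= => ->; by rewrite mul0r.
Qed.

Definition S (K : {set {set atm}}) g := \sum_(k in K) rho_c prob k * G g k.

Lemma S_expand (K : {set {set atm}}) g :
  (forall k, k \in K -> composite_choice X k) ->
  S K g = \sum_phi Pw phi * \sum_(k in [set k in K | agree k (Fs phi)]) G g k.
Proof.
move=> hK; rewrite /S.
under eq_bigr => k hk do rewrite (rho_expand (hK k hk).1.1) mulr_suml.
rewrite exchange_big /=; apply: eq_bigr => phi _.
rewrite mulr_sumr [RHS](eq_bigl (fun k => (k \in K) && agree k (Fs phi))); last by move=> k; rewrite !inE.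
rewrite big_mkcondr /=; apply: eq_bigr => k _; by case: ifP; rewrite ?mul0r.
Qed.

Variable mass : Dom -> {set U} -> R.

Lemma xiE (K : {set {set atm}}) :
  xi_c prob X mass K = (S K (Belief mass), S K (Plaus X mass)).
Proof.
rewrite /xi_c [LHS]surjective_pairing; congr pair.
  rewrite (@big_morph _ _ fst 0 +%R (0,0) (@iadd R)) //; apply: eq_bigr => k _.
  rewrite /rho_comp /imul /=; congr (_ * _).
  by rewrite (@big_morph _ _ fst 1 *%R (1,1) (@imul R)).
rewrite (@big_morph _ _ snd 0 +%R (0,0) (@iadd R)) //; apply: eq_bigr => k _.
rewrite /rho_comp /imul /=; congr (_ * _).
by rewrite (@big_morph _ _ snd 1 *%R (1,1) (@imul R)).
Qed.

End Sums.

Theorem mainTheorem3 (R : realFieldType) (Fct Dom U : finType)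
  (prob : Fct -> R) (X : Dom -> {set U}) (mass : Dom -> {set U} -> R)
  (hprob : forall f, 0 <= prob f <= 1)
  (hX : forall D, X D != set0)
  (hmass : is_mass_assignment X mass)
  (K1 K2 : {set {set atomic Fct Dom U}})
  (hK1 : forall k, k \in K1 -> composite_choice X k)
  (hK2 : forall k, k \in K2 -> composite_choice X k)
  (hpi1 : pairwise_incompatible K1)
  (hpi2 : pairwise_incompatible K2)
  (heq : equivalent X K1 K2) :
  xi_c prob X mass K1 = xi_c prob X mass K2.
Proof.
have hB : forall D, Belief mass D (X D) = 1 by move=> D; rewrite /Belief; have [_ _ ->] := hmass D.
have hP : forall D, Plaus X mass D (X D) = 1.
  move=> D; rewrite /Plaus setDv /Belief (big_pred1 set0); last by move=> B; rewrite subset0.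
  by have [-> _ _] := hmass D; rewrite subr0.
rewrite !xiE; congr pair; rewrite (S_expand (X:=X) _ _ hK1) (S_expand (X:=X) _ _ hK2); apply: eq_bigr => phi _; congr (_ * _);
  exact: sumF.
Qed.
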